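(* Let $k\ge0$, let $X_n$ be a homogeneous and spatially independent random subcomplex of $\triangle_n$, let $T\subset\triangle_n$ be a finite $(k+1)$-tree with $\mathbb{P}(T\subset X_n)>0$, and let $\sigma_1,\dots,\sigma_i$ be $(k+1)$-simplices of $\triangle_n$ not in $T$. Then \[ \mathbb{P}(\sigma_j\notin X_n\text{ for all }j=1,\dots,i\mid T\subset X_n)\ge1-i\,s_k . \]
   Context: Random subcomplexes of $\triangle_n=2^{[n]}$ (random families of subsets of $[n]$ closed under subsets); homogeneous: law invariant under permutations of $[n]$; spatially independent: $\mathbb{P}(Y_1\cup Y_2\subset X)\mathbb{P}(Y_1\cap Y_2\subset X)=\mathbb{P}(Y_1\subset X)\mathbb{P}(Y_2\subset X)$ for all subcomplexes $Y_1,Y_2$. A $k$-simplex is a $(k+1)$-element set; $K(\tau)$ denotes the set of all subsets of $\tau$. A finite simplicial complex $T$ is a $(k+1)$-tree if for some $k$-simplex $\tau\in T$ it is obtained from $K(\tau)$ by finitely many steps, each adding $K(\tau'\cup\{v\})$ where $\tau'$ is a $k$-simplex already present and $v$ is a vertex not yet present. $s_k=\mathbb{P}(\tau_1\cup\tau_2\in X_n\mid\tau_1,\tau_2\in X_n)$ if $\mathbb{P}(\tau_1,\tau_2\in X_n)>0$ and $s_k=0$ otherwise, where $\tau_1,\tau_2$ are any $k$-simplices of $\triangle_n$ with $\#(\tau_1\cap\tau_2)=k$ (well defined by homogeneity). *)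

(* Defs.v *)
(* Vertex set [n] is modelled as 'I_n; a random subcomplex of
   triangle_n is a probability mass function on families of subsets of 'I_n,
   supported on simplicial complexes (families closed under subsets). *)
From HB Require Import structures.
From mathcomp Require Import all_boot all_order.
From mathcomp Require Import fingroup perm.
From mathcomp Require Import all_algebra.
Set Implicit Arguments. Unset Strict Implicit. Unset Printing Implicit Defensive.
Import Order.TTheory GRing.Theory Num.Theory.
Local Open Scope ring_scope.

Definition is_complex (n : nat) (X : {set {set 'I_n}}) : bool :=
  [forall A : {set 'I_n}, forall B : {set 'I_n}, (A \in X) && (B \subset A) ==> (B \in X)].

Definition random_complex (R : realFieldType) (n : nat)
    (mu : {set {set 'I_n}} -> R) : Prop :=
  [/\ forall X, 0 <= mu X,
      \sum_X mu X = 1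
    & forall X, mu X != 0 -> is_complex X].

Definition prob (R : realFieldType) (n : nat) (mu : {set {set 'I_n}} -> R)
    (E : pred {set {set 'I_n}}) : R :=
  \sum_(X | E X) mu X.

(* conditional probability P(E | F), taken to be 0 if P(F) = 0 *)
Definition cprob (R : realFieldType) (n : nat) (mu : {set {set 'I_n}} -> R)
    (E F : pred {set {set 'I_n}}) : R :=
  if prob mu F == 0 then 0
  else prob mu (fun X => E X && F X) / prob mu F.

Definition homogeneous (R : realFieldType) (n : nat)
    (mu : {set {set 'I_n}} -> R) : Prop :=
  forall (s : {perm 'I_n}) (X : {set {set 'I_n}}),
    mu [set (s @: A) | A : {set 'I_n} in X] = mu X.

Definition spatially_independent (R : realFieldType) (n : nat)
    (mu : {set {set 'I_n}} -> R) : Prop :=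
  forall Y1 Y2 : {set {set 'I_n}}, is_complex Y1 -> is_complex Y2 ->
    prob mu (fun X => (Y1 :|: Y2) \subset X) *
    prob mu (fun X => (Y1 :&: Y2) \subset X) =
    prob mu (fun X => Y1 \subset X) * prob mu (fun X => Y2 \subset X).

(* s_k = P(tau1 \cup tau2 \in X | tau1, tau2 \in X) for k-simplices tau1, tau2
   with #(tau1 \cap tau2) = k, when P(tau1, tau2 \in X) > 0, and 0 otherwise.
   The pair (tau1, tau2) is an arbitrary such pair (well defined by
   homogeneity); if no such pair exists, s_k = 0. *)
Definition s_k (R : realFieldType) (n : nat) (mu : {set {set 'I_n}} -> R)
    (k : nat) : R :=
  match [pick p : {set 'I_n} * {set 'I_n} |
           [&& #|p.1| == k.+1, #|p.2| == k.+1 & #|p.1 :&: p.2| == k]] with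
  | Some p =>
      if 0 < prob mu (fun X => (p.1 \in X) && (p.2 \in X))
      then cprob mu (fun X => (p.1 :|: p.2) \in X)
                    (fun X => (p.1 \in X) && (p.2 \in X))
      else 0
  | None => 0
  end.

Definition Kfull (n : nat) (tau : {set 'I_n}) : {set {set 'I_n}} := powerset tau.

Inductive is_tree (n k : nat) : {set {set 'I_n}} -> Prop :=
  | tree_base (tau : {set 'I_n}) :
      #|tau| = k.+1 -> @is_tree n k (Kfull tau)
  | tree_step (T : {set {set 'I_n}}) (tau' : {set 'I_n}) (v : 'I_n) :
      @is_tree n k T -> tau' \in T -> #|tau'| = k.+1 ->
      v \notin cover T ->
      @is_tree n k (T :|: Kfull (v |: tau')).
Arguments is_tree : clear implicits.

(* Main.v *)
Require Import Defs.
From HB Require Import structures.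
From mathcomp Require Import all_boot all_order.
From mathcomp Require Import fingroup perm.
From mathcomp Require Import all_algebra.
From mathcomp Require Import ring lra.
Import Order.TTheory GRing.Theory Num.Theory.
Local Open Scope ring_scope.
Set Implicit Arguments. Unset Strict Implicit.
Set Implicit Arguments. Unset Strict Implicit.

Lemma perm_seq n (s t : seq 'I_n) : uniq s -> uniq t -> size s = size t ->
  exists p : {perm 'I_n}, map p s = t.
Proof.
elim: s t => [|x s IH] [|y t] //=.
  by move=> _ _ _; exists 1%g.
move=> /andP[xs us] /andP[yt ut] [Hsz].
have [p' Hp'] := IH t us ut Hsz.
exists (p' * tperm (p' x) y)%g; rewrite permM tpermL; congr (_ :: _).
rewrite -Hp'; apply/eq_in_map => z Hz; rewrite permM tpermD //.
  by rewrite (inj_eq perm_inj); apply/eqP => E; move: xs; rewrite E Hz.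
apply/eqP => E; move: yt; rewrite E -Hp' map_f //.
Qed.

Lemma imset_enum n (p : {perm 'I_n}) (C C' : {set 'I_n}) :
  map p (enum C) = enum C' -> p @: C = C'.
Proof.
move=> H; apply/setP => w; rewrite -[w \in C']mem_enum -H.
apply/imsetP/mapP => -[z Hz ->]; exists z => //; by rewrite ?mem_enum in Hz *.
Qed.

Lemma pair_decomp n k (A B : {set 'I_n}) : #|A| = k.+1 -> #|B| = k.+1 -> #|A :&: B| = k ->
  exists x y, [/\ x \notin A :&: B, y \notin A :&: B, x != y,
     A = x |: (A :&: B) & B = y |: (A :&: B)].
Proof.
move=> HA HB HC.
have one : forall D : {set 'I_n}, #|D| = k.+1 -> D :&: (A :&: B) = A :&: B ->
   exists x, x \notin A :&: B /\ D = x |: (A :&: B).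
  move=> D HD HDC; have : #|D :\: (A :&: B)| == 1%N by rewrite cardsD HDC HD HC subSnn.
  case/cards1P => x Hx; exists x; split.
    have : x \in D :\: (A :&: B) by rewrite Hx set11.
    by rewrite inE => /andP[].
  by rewrite -[in LHS](setID D (A :&: B)) HDC Hx setUC.
have [x [Hx EA]] := one A HA ltac:(by rewrite setIA setIid).
have [y [Hy EB]] := one B HB ltac:(by rewrite setIC -setIA setIid).
exists x, y; split => //; apply/eqP => Exy.
have xA : x \in A by rewrite EA setU11.
have xB : x \in B by rewrite Exy EB setU11.
by rewrite inE xA xB in Hx.
Qed.

Lemma pair_perm n k (t1 t2 p1 p2 : {set 'I_n}) :
  #|t1| = k.+1 -> #|t2| = k.+1 -> #|t1 :&: t2| = k ->
  #|p1| = k.+1 -> #|p2| = k.+1 -> #|p1 :&: p2| = k ->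
  exists s : {perm 'I_n}, s @: t1 = p1 /\ s @: t2 = p2.
Proof.
move=> h1 h2 h3 h4 h5 h6.
have [x [y [Hx Hy Hxy E1 E2]]] := pair_decomp h1 h2 h3.
have [x' [y' [Hx' Hy' Hxy' E1' E2']]] := pair_decomp h4 h5 h6.
have u1 : uniq (x :: y :: enum (t1 :&: t2)).
  by rewrite /= in_cons !mem_enum (negbTE Hx) Hy enum_uniq orbF Hxy.
have u2 : uniq (x' :: y' :: enum (p1 :&: p2)).
  by rewrite /= in_cons !mem_enum (negbTE Hx') Hy' enum_uniq orbF Hxy'.
have sz : size (x :: y :: enum (t1 :&: t2)) = size (x' :: y' :: enum (p1 :&: p2)).
  by rewrite /= -!cardE h3 h6.
have [p Hp] := perm_seq u1 u2 sz.
move: Hp => /= [ex ey ee]; exists p.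
split.
  by rewrite {1}E1 [RHS]E1' imsetU1 ex (imset_enum ee).
by rewrite {1}E2 [RHS]E2' imsetU1 ey (imset_enum ee).
Qed.

Lemma prob_ge0 (R : realFieldType) n (mu : {set {set 'I_n}} -> R) E :
  (forall X, 0 <= mu X) -> 0 <= prob mu E.
Proof. by move=> H; apply: sumr_ge0 => X _. Qed.

Lemma prob_ext (R : realFieldType) n (mu : {set {set 'I_n}} -> R) (E F : pred {set {set 'I_n}}) :
  (forall X, mu X != 0 -> is_complex X) ->
  (forall X, is_complex X -> E X = F X) -> prob mu E = prob mu F.
Proof.
move=> Hc H; rewrite /prob big_mkcond [RHS]big_mkcond; apply: eq_bigr => X _.
have [->|/Hc c] := eqVneq (mu X) 0; first by rewrite !if_same.
by rewrite H.
Qed.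

Lemma prob_mono (R : realFieldType) n (mu : {set {set 'I_n}} -> R) (E F : pred {set {set 'I_n}}) :
  (forall X, 0 <= mu X) -> (forall X, F X -> E X) -> prob mu F <= prob mu E.
Proof.
move=> H0 H; rewrite /prob big_mkcond [X in _ <= X]big_mkcond; apply: ler_sum => X _.
case: ifP => [/H -> //|_]; by case: ifP.
Qed.

Lemma transport (R : realFieldType) n (mu : {set {set 'I_n}} -> R) (s : {perm 'I_n})
  (E : pred {set {set 'I_n}}) : homogeneous mu ->
  prob mu (fun X => E [set (s @: A) | A : {set 'I_n} in X]) = prob mu E.
Proof.
move=> Hh; symmetry; rewrite /prob (reindex_inj (imset_inj (imset_inj (@perm_inj _ s)))) /=.
by apply: eq_bigr => X _; apply: Hh.
Qed.

Lemma sk_ge0 (R : realFieldType) n (mu : {set {set 'I_n}} -> R) k :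
  (forall X, 0 <= mu X) -> 0 <= s_k mu k.
Proof.
move=> H0; rewrite /s_k; case: pickP => [p _|//]; case: ifP => // _.
rewrite /cprob; case: ifP => // _; apply: divr_ge0; exact: prob_ge0.
Qed.

Lemma sk_eq (R : realFieldType) n (mu : {set {set 'I_n}} -> R) k (t1 t2 : {set 'I_n}) :
  homogeneous mu -> #|t1| = k.+1 -> #|t2| = k.+1 -> #|t1 :&: t2| = k ->
  0 < prob mu (fun X => (t1 \in X) && (t2 \in X)) ->
  s_k mu k = prob mu (fun X => ((t1 :|: t2) \in X) && ((t1 \in X) && (t2 \in X)))
             / prob mu (fun X => (t1 \in X) && (t2 \in X)).
Proof.
move=> Hh h1 h2 h3 Hpos; rewrite /s_k; case: pickP => [[p1 p2] /= /and3P[/eqP c1 /eqP c2 /eqP c3]|Hn];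
  last by move: (Hn (t1, t2)); rewrite /= h1 h2 h3 !eqxx.
have [s [e1 e2]] := pair_perm h1 h2 h3 c1 c2 c3.
have memh : forall (A : {set 'I_n}) (X : {set {set 'I_n}}), (s @: A \in [set (s @: B) | B : {set 'I_n} in X]) = (A \in X).
  move=> A X; apply/imsetP/idP => [[B HB /(imset_inj (@perm_inj _ s)) ->] //|HA].
  by exists A.
have f1 : prob mu (fun X => (p1 \in X) && (p2 \in X)) = prob mu (fun X => (t1 \in X) && (t2 \in X)).
  rewrite -(transport s _ Hh); apply: eq_bigl => X /=; by rewrite -e1 -e2 !memh.
have f2 : prob mu (fun X => ((p1 :|: p2) \in X) && ((p1 \in X) && (p2 \in X))) =
          prob mu (fun X => ((t1 :|: t2) \in X) && ((t1 \in X) && (t2 \in X))).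
  rewrite -(transport s _ Hh); apply: eq_bigl => X /=; by rewrite -e1 -e2 -imsetU !memh.
rewrite f1 Hpos /cprob f1 (gt_eqF Hpos) f2 //.
Qed.
Lemma complexP n (X : {set {set 'I_n}}) :
  is_complex X -> forall A B : {set 'I_n}, A \in X -> B \subset A -> B \in X.
Proof. move=> /forallP H A B HA HB; move/forallP: (H A) => /(_ B) /implyP; apply; by rewrite HA HB. Qed.

Lemma complexI n (X : {set {set 'I_n}}) :
  (forall A B : {set 'I_n}, A \in X -> B \subset A -> B \in X) -> is_complex X.
Proof. move=> H; apply/forallP => A; apply/forallP => B; apply/implyP => /andP[]; exact: H. Qed.

Lemma Kfull_complex n (t : {set 'I_n}) : is_complex (Kfull t).
Proof. apply: complexI => A B; rewrite /Kfull !powersetE => HA HB; exact: subset_trans HB HA. Qed.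

Lemma complexU n (X Y : {set {set 'I_n}}) :
  is_complex X -> is_complex Y -> is_complex (X :|: Y).
Proof.
move=> /complexP HX /complexP HY; apply: complexI => A B; rewrite !inE => /orP[HA|HA] HB.
  by rewrite (HX A B).
by rewrite (HY A B) ?orbT.
Qed.

Lemma tree_complex n k T : is_tree n k T -> is_complex T.
Proof.
elim=> [tau _|T0 tau' v _ IH _ _ _]; first exact: Kfull_complex.
by apply: complexU => //; apply: Kfull_complex.
Qed.

Lemma tree_clique n k T : is_tree n k T -> forall s : {set 'I_n}, #|s| = k.+2 ->
  (forall a b, a \in s -> b \in s -> a != b -> [set a; b] \in T) -> s \in T.
Proof.
elim=> [tau Htau|T0 tau' v HT IH Ht' Hc' Hv] s Hs Hab.
- have sub : s \subset tau.
    apply/subsetP => u Hu.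
    have : (0 < #|s :\ u|)%N by move: Hs; rewrite (cardsD1 u) Hu add1n => -[->].
    case/card_gt0P => w; rewrite !inE => /andP[Hwu Hw].
    have Huw : u != w by rewrite eq_sym.
    move: (Hab u w Hu Hw Huw).
    by rewrite /Kfull powersetE subUset sub1set => /andP[].
  by move: (subset_leq_card sub); rewrite Hs Htau ltnn.
- have Tc := complexP (@tree_complex _ _ _ HT).
  have vT : forall u, [set u; v] \in T0 -> False.
    move=> u Hu; move/negP: Hv; apply; apply/bigcupP; exists [set u; v] => //.
    by rewrite !inE eqxx orbT.
  case Hvs: (v \in s).
  + rewrite inE; apply/orP; right; rewrite /Kfull powersetE; apply/subsetP => u Hu.
    rewrite inE; have [->|Huv] := eqVneq u v; first by rewrite inE eqxx.
    case/setUP: (Hab u v Hu Hvs Huv) => [/vT//|].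
    by rewrite /Kfull powersetE subUset sub1set !inE (negbTE Huv) => /andP[].
  + rewrite inE IH //; move=> a b Ha Hb Hab'.
    case/setUP: (Hab a b Ha Hb Hab') => [//|].
    rewrite /Kfull powersetE => Hsub; apply: (Tc tau') => //.
    apply/subsetP => x Hx; move/subsetP: Hsub => /(_ x Hx); rewrite inE.
    have [Exv|Hxv] := eqVneq x v; last by rewrite inE (negbTE Hxv).
    move: Hx; rewrite Exv !inE => /orP[]/eqP Ev _; by move: Hvs; rewrite Ev ?Ha ?Hb.
Qed.

Lemma tree_nonclique n k T (s : {set 'I_n}) : is_tree n k T -> #|s| = k.+2 -> s \notin T ->
  exists a b, [/\ a \in s, b \in s, a != b & [set a; b] \notin T].
Proof.
move=> HT Hs HsT.
case: (boolP [exists a, exists b, [&& a \in s, b \in s, a != b & [set a; b] \notin T]]).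
  by case/existsP => a /existsP [b] /and4P[]; exists a, b.
rewrite negb_exists => /forallP H; exfalso; move/negP: HsT; apply.
apply: (@tree_clique _ _ _ HT _ Hs) => a b Ha Hb Hab.
move: (H a); rewrite negb_exists => /forallP /(_ b); by rewrite Ha Hb Hab negbK.
Qed.

Lemma K_sub n (X : {set {set 'I_n}}) (t : {set 'I_n}) :
  is_complex X -> (Kfull t \subset X) = (t \in X).
Proof.
move=> /complexP Hc; apply/idP/idP => [/subsetP H|Ht].
  by apply: H; rewrite /Kfull powersetE subxx.
by apply/subsetP => B; rewrite /Kfull powersetE => HB; apply: Hc Ht HB.
Qed.

Lemma one_sigma (R : realFieldType) n k (mu : {set {set 'I_n}} -> R) :
  random_complex mu -> homogeneous mu -> spatially_independent mu ->
  forall T, is_tree n k T -> forall s : {set 'I_n}, #|s| = k.+2 -> s \notin T ->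
  prob mu (fun X => (s \in X) && (T \subset X)) <= s_k mu k * prob mu (fun X => T \subset X).
Proof.
move=> [H0 _ Hc] Hh Hind T HT s Hs HsT.
have [a [b [Ha Hb Hab HabT]]] := tree_nonclique HT Hs HsT.
have Tc := complexP (tree_complex HT).
set t1 := s :\ a; set t2 := s :\ b.
have h1 : #|t1| = k.+1 by move: Hs; rewrite (cardsD1 a) Ha add1n => -[].
have h2 : #|t2| = k.+1 by move: Hs; rewrite (cardsD1 b) Hb add1n => -[].
have bt1 : b \in t1 by rewrite !inE eq_sym Hab.
have eI12 : t1 :&: t2 = t1 :\ b.
  apply/setP => x; rewrite !inE; by case: (x != a); case: (x != b); case: (x \in s).
have h3 : #|t1 :&: t2| = k by move: h1; rewrite eI12 (cardsD1 b) bt1 add1n => -[].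
have eU12 : t1 :|: t2 = s.
  apply/setP => x; rewrite !inE -andb_orl.
  have -> : (x != a) || (x != b).
    by have [->|//] := eqVneq x a; rewrite Hab orbT.
  by [].
have st1 : t1 \subset s by apply: subD1set.
have st2 : t2 \subset s by apply: subD1set.
set Y1 := T :|: (Kfull t1 :|: Kfull t2).
set Y2 := Kfull s.
have cY1 : is_complex Y1 by apply: complexU; [exact: tree_complex HT|apply: complexU; apply: Kfull_complex].
have cY2 : is_complex Y2 by apply: Kfull_complex.
have KK : Kfull t1 :|: Kfull t2 \subset Kfull s by rewrite subUset !powersetS st1 st2.
have eU : Y1 :|: Y2 = T :|: Kfull s by rewrite /Y1 /Y2 -setUA (setUidPr KK).
have eI : Y1 :&: Y2 = Kfull t1 :|: Kfull t2.
  apply/setP => F; rewrite /Y1 /Y2 /Kfull !inE ?powersetE !subsetD1.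
  case sF : (F \subset s); rewrite ?andbF ?andbT //=.
  case: (boolP (F \in T)) => //= FT.
  case: (boolP (a \in F)) => //= aF; case: (boolP (b \in F)) => //= bF.
  exfalso; move/negP: HabT; apply; apply: (Tc F) => //.
  by rewrite subUset !sub1set aF bF.
have Hi := Hind Y1 Y2 cY1 cY2; rewrite eU eI in Hi.
have eA : prob mu (fun X => (T :|: Kfull s) \subset X) = prob mu (fun X => (s \in X) && (T \subset X)).
  by apply: prob_ext => // X cX; rewrite subUset (K_sub _ cX) andbC.
have eq_ : prob mu (fun X => (Kfull t1 :|: Kfull t2) \subset X) = prob mu (fun X => (t1 \in X) && (t2 \in X)).
  by apply: prob_ext => // X cX; rewrite subUset !(K_sub _ cX).
have er : prob mu (fun X => Y2 \subset X) =
   prob mu (fun X => ((t1 :|: t2) \in X) && ((t1 \in X) && (t2 \in X))).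
  apply: prob_ext => // X cX; rewrite /Y2 (K_sub _ cX) eU12.
  case sX: (s \in X) => //=.
  by rewrite (complexP cX sX st1) (complexP cX sX st2).
have PY1 : prob mu (fun X => Y1 \subset X) <= prob mu (fun X => T \subset X).
  by apply: prob_mono => // X; apply: subset_trans; apply: subsetUl.
have PY1ge : 0 <= prob mu (fun X => Y1 \subset X) by apply: prob_ge0.
rewrite eA eq_ er in Hi.
set A := prob mu (fun X => (s \in X) && (T \subset X)) in Hi *.
set q := prob mu (fun X => (t1 \in X) && (t2 \in X)) in Hi *.
set r := prob mu (fun X => ((t1 :|: t2) \in X) && ((t1 \in X) && (t2 \in X))) in Hi *.
have q0 : 0 <= q by apply: prob_ge0.
have r0 : 0 <= r by apply: prob_ge0.
have A0 : A <= q.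
  rewrite /A /q -eA -eq_; apply: prob_mono => // X; apply: subset_trans.
  by rewrite (subset_trans KK) // subsetUr.
have [qz|qp] := eqVneq q 0.
  apply: (le_trans A0); rewrite qz; apply: mulr_ge0; [exact: sk_ge0|exact: prob_ge0].
have qpos : 0 < q by rewrite lt_def qp q0.
rewrite (sk_eq Hh h1 h2 h3 qpos) -/q -/r.
have -> : A = prob mu (fun X => Y1 \subset X) * (r / q).
  by rewrite mulrA -Hi mulfK.
rewrite [_ * prob mu _]mulrC; apply: ler_wpM2r => //; exact: divr_ge0.
Qed.

Lemma prob_split (R : realFieldType) n (mu : {set {set 'I_n}} -> R) (E F : pred {set {set 'I_n}}) :
  prob mu F = prob mu (fun X => E X && F X) + prob mu (fun X => ~~ E X && F X).
Proof. by rewrite /prob (bigID E) /=; congr (_ + _); apply: eq_bigl => X; rewrite andbC. Qed.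

Lemma union_bound (R : realFieldType) n (mu : {set {set 'I_n}} -> R) i (sigma : 'I_i -> {set 'I_n})
  (F : pred {set {set 'I_n}}) : (forall X, 0 <= mu X) ->
  prob mu (fun X => ~~ [forall j, sigma j \notin X] && F X) <=
  \sum_(j < i) prob mu (fun X => (sigma j \in X) && F X).
Proof.
move=> H0; rewrite /prob big_mkcond.
under [X in _ <= X]eq_bigr do rewrite big_mkcond.
rewrite exchange_big /=; apply: ler_sum => X _.
have nn : forall j : 'I_i, 0 <= (if (sigma j \in X) && F X then mu X else 0).
  by move=> j; case: ifP.
case: ifP => [/andP[/forallPn [j /negPn Hj] HF]|_]; last by apply: sumr_ge0.
rewrite (bigD1 j) //= Hj HF /= lerDl; apply: sumr_ge0 => l _; by case: ifP.
Qed.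

Unset Implicit Arguments.

Theorem lemma4p2 (R : realFieldType) (n k : nat)
    (mu : {set {set 'I_n}} -> R)
    (Hmu : random_complex mu) (Hhom : homogeneous mu)
    (Hind : spatially_independent mu)
    (T : {set {set 'I_n}}) (HT : is_tree n k T)
    (HTpos : 0 < prob mu (fun X => T \subset X))
    (i : nat) (sigma : 'I_i -> {set 'I_n})
    (Hsig : forall j, #|sigma j| = k.+2)
    (HsigT : forall j, sigma j \notin T) :
  cprob mu (fun X => [forall j, sigma j \notin X]) (fun X => T \subset X)
    >= 1 - i%:R * s_k mu k.
Proof.
have [H0 _ _] := Hmu.
rewrite /cprob (gt_eqF HTpos) ler_pdivlMr //.
set PT := prob mu (fun X => T \subset X) in HTpos *.
have Hs := prob_split mu (fun X => [forall j, sigma j \notin X]) (fun X => T \subset X).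
rewrite -/PT in Hs.
have Hu := union_bound sigma (fun X => T \subset X) H0.
have Hb : \sum_(j < i) prob mu (fun X => (sigma j \in X) && (T \subset X)) <= i%:R * (s_k mu k * PT).
  rewrite mulr_natl -[X in _ *+ X](card_ord i) -sumr_const; apply: ler_sum => j _.
  exact: one_sigma.
have Hub := le_trans Hu Hb.
set G := prob mu (fun X => [forall j, sigma j \notin X] && (T \subset X)) in Hs *.
set U := prob mu _ in Hub Hs.
rewrite mulrBl mul1r -mulrA; lra.
Qed.
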